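(* Let $n\in\mathbb{Z}^+$, $n\geq 2$, $\beta=\frac{n-3}{n-1}$, let $\alpha:[0,\infty)\to\mathbb{R}$ be continuous, and let $u$ be a $C^3$ solution on $[0,1]\times[0,T)$ of $$u_{xxt}+uu_{xxx}+\beta u_xu_{xx}+\alpha(t)u_{xx}=0$$ with $u(1,t)=u_x(0,t)=u_x(1,t)=0$. Let $H(t)=-\int_0^1u_x(x,t)\,dx=u(0,t)$. Then for $t\in[0,T)$, $$H'(t)+\alpha(t)H(t)+\frac{n}{n-1}\int_0^1 u_x(x,t)^2\,dx=0,$$ and consequently $H'(t)+\alpha(t)H(t)+\frac{n}{n-1}H(t)^2\leq 0$. *)

(* Defs.v *)
From Stdlib Require Import Reals List.
From Coquelicot Require Import Coquelicot.
Open Scope R_scope.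

Definition dx (u : R -> R -> R) : R -> R -> R :=
  fun x t => Derive (fun y => u y t) x.
Definition dt (u : R -> R -> R) : R -> R -> R :=
  fun x t => Derive (fun s => u x s) t.

(* Iterated partial derivative: [true] = d/dx, [false] = d/dt,
   applied from the head of the list outwards. *)
Fixpoint dpart (w : list bool) (u : R -> R -> R) : R -> R -> R :=
  match w with
  | nil => u
  | b :: w' => (if b then dx else dt) (dpart w' u)
  end.

Definition C3_at (u : R -> R -> R) (x t : R) : Prop :=
  (forall w : list bool, (length w < 3)%nat ->
     ex_derive (fun y => dpart w u y t) x /\ ex_derive (fun s => dpart w u x s) t) /\
  (forall w : list bool, (length w <= 3)%nat ->
     continuous (fun p : R * R => dpart w u (fst p) (snd p)) (x, t)).

Definition C3_on_strip (u : R -> R -> R) (T : Rbar) : Prop :=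
  forall x t, 0 <= x <= 1 -> 0 <= t -> Rbar_lt t T ->
    exists eps : posreal, forall y s,
      Rabs (y - x) < eps -> Rabs (s - t) < eps -> C3_at u y s.

Definition continuous_on_nonneg (alpha : R -> R) : Prop :=
  forall t, 0 <= t ->
    filterlim alpha (within (fun s => 0 <= s) (locally t)) (locally (alpha t)).

(* Main.v *)
Require Import Defs.
From Stdlib Require Import Reals List Lra Lia Classical ClassicalEpsilon.
From Coquelicot Require Import Coquelicot.
Open Scope R_scope.
Lemma cont_x (f : R -> R -> R) x s :
  continuous (fun p : R * R => f (fst p) (snd p)) (x, s) ->
  continuous (fun y => f y s) x.
Proof.
  intro H.
  apply (continuous_comp_2 (fun y => y) (fun _ => s) f x).
  apply continuous_id. apply continuous_const. exact H.
Qed.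

Lemma cont2d (f : R -> R -> R) x s :
  continuous (fun p : R * R => f (fst p) (snd p)) (x, s) ->
  continuity_2d_pt f x s.
Proof.
  intro H. apply continuity_2d_pt_filterlim. exact H.
Qed.

Lemma uniform_nbhd (u : R -> R -> R) (T : Rbar) t :
  C3_on_strip u T -> 0 <= t -> Rbar_lt t T ->
  exists d : posreal, forall x s, 0 <= x <= 1 -> Rabs (s - t) < d -> C3_at u x s.
Proof.
  intros HC Ht HT.
  assert (Hc : forall x, exists e : posreal, 0 <= x <= 1 ->
     forall y s, Rabs (y - x) < e -> Rabs (s - t) < e -> C3_at u y s).
  { intro x. destruct (classic (0 <= x <= 1)) as [Hx|Hx].
    - destruct (HC x t Hx Ht HT) as [e He]. exists e. intros _. exact He.
    - exists (mkposreal 1 Rlt_0_1). intro H; contradiction. }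
  set (delta := fun x => proj1_sig (constructive_indefinite_description _ (Hc x))).
  assert (Hd : forall x, 0 <= x <= 1 ->
     forall y s, Rabs (y - x) < delta x -> Rabs (s - t) < delta x -> C3_at u y s).
  { intro x. unfold delta. destruct (constructive_indefinite_description _ (Hc x)); simpl. auto. }
  destruct (compactness_value_1d 0 1 delta) as [d Hd2].
  exists d. intros x s Hx Hs.
  apply NNPP. intro Hn. apply (Hd2 x Hx). intros [x' [Hx' [H1 H2]]].
  apply Hn. apply (Hd x' Hx' x s H1). lra.
Qed.

Lemma deriv_zero_right (f : R -> R) t e :
  0 < e -> (forall s, t <= s < t + e -> f s = 0) -> ex_derive f t -> Derive f t = 0.
Proof.
  intros He Hz [l Hl]. rewrite (is_derive_unique _ _ _ Hl).
  apply is_derive_Reals in Hl.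
  destruct (Req_dec l 0) as [|Hl0]; auto. exfalso.
  destruct (Hl (Rabs l) (Rabs_pos_lt _ Hl0)) as [dl Hdl].
  set (h := Rmin (dl/2) (e/2)).
  assert (hp : 0 < h). { unfold h. apply Rmin_glb_lt; generalize (cond_pos dl); lra. }
  assert (h1 : h <= dl/2) by apply Rmin_l.
  assert (h2 : h <= e/2) by apply Rmin_r.
  assert (Hh := Hdl h (Rgt_not_eq _ _ hp)).
  rewrite Rabs_pos_eq in Hh by lra.
  rewrite (Hz (t+h)) in Hh by lra. rewrite (Hz t) in Hh by lra.
  generalize (cond_pos dl); intro.
  specialize (Hh ltac:(lra)).
  replace ((0 - 0) / h - l) with (- l) in Hh by (field; lra).
  rewrite Rabs_Ropp in Hh. lra.
Qed.
Definition Kh (f0 f1 f2 f3 : R -> R) := forall x, 0 <= x <= 1 ->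
  is_derive f0 x (f1 x) /\ is_derive f1 x (f2 x) /\ is_derive f2 x (f3 x) /\
  continuous f0 x /\ continuous f1 x /\ continuous f2 x /\ continuous f3 x.

Ltac rng01 := try rewrite Rmin_left by lra; try rewrite Rmax_right by lra.

Lemma cR_plus (f g : R -> R) x : continuous f x -> continuous g x -> continuous (fun y => f y + g y) x.
Proof. intros; apply (continuous_plus (V:=R_NormedModule)); auto. Qed.
Lemma cR_minus (f g : R -> R) x : continuous f x -> continuous g x -> continuous (fun y => f y - g y) x.
Proof. intros; apply (continuous_minus (V:=R_NormedModule)); auto. Qed.
Lemma cR_mult (f g : R -> R) x : continuous f x -> continuous g x -> continuous (fun y => f y * g y) x.
Proof. intros; apply (continuous_mult (K:=R_AbsRing)); auto. Qed.
Lemma cR_pow2 (f : R -> R) x : continuous f x -> continuous (fun y => f y ^ 2) x.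
Proof. intros. simpl. apply cR_mult; auto. apply cR_mult; auto. apply continuous_const. Qed.
Lemma cR_opp (f : R -> R) x : continuous f x -> continuous (fun y => - f y) x.
Proof. intros; apply (continuous_opp (V:=R_NormedModule)); auto. Qed.
Lemma cR_const (c : R) x : continuous (fun _ : R => c) x.
Proof. apply continuous_const. Qed.
Lemma cR_id x : continuous (fun y : R => y) x.
Proof. apply continuous_id. Qed.

Ltac cont := repeat first
  [ assumption | apply cR_const | apply cR_id | apply cR_pow2 | apply cR_minus | apply cR_plus | apply cR_opp | apply cR_mult ].

Lemma L_A1 f0 f1 f2 f3 : Kh f0 f1 f2 f3 -> is_RInt f1 0 1 (f0 1 - f0 0).
Proof.
  intro K. apply (is_RInt_derive f0 f1); rng01; intros x Hx; apply K; lra.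
Qed.

Lemma L_A2 f0 f1 f2 f3 : Kh f0 f1 f2 f3 ->
  is_RInt (fun x => x * f2 x) 0 1 (f1 1 - f0 1 + f0 0).
Proof.
  intro K.
  replace (f1 1 - f0 1 + f0 0) with ((1 * f1 1 - f0 1) - (0 * f1 0 - f0 0)) by ring.
  apply (is_RInt_derive (fun x => x * f1 x - f0 x)); rng01; intros x Hx;
    destruct (K x Hx) as (D0 & D1 & D2 & C0 & C1 & C2 & C3).
  - auto_derive.
    + repeat split; eexists; eassumption.
    + replace (Derive (fun x0 => f1 x0) x) with (f2 x) by (symmetry; apply is_derive_unique; exact D1).
      replace (Derive (fun x0 => f0 x0) x) with (f1 x) by (symmetry; apply is_derive_unique; exact D0).
      ring.
  - cont.
Qed.

Lemma L_E f0 f1 f2 f3 a b : Kh f0 f1 f2 f3 ->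
  is_RInt (fun x => x * (f0 x * f3 x + b * f1 x * f2 x + a * f2 x)) 0 1
   ((1 * f0 1 * f2 1 - f0 1 * f1 1 + (b-1)/2 * 1 * f1 1 ^ 2 + a * (1 * f1 1 - f0 1))
    - (0 * f0 0 * f2 0 - f0 0 * f1 0 + (b-1)/2 * 0 * f1 0 ^ 2 + a * (0 * f1 0 - f0 0))
    + (3 - b)/2 * RInt (fun x => f1 x ^ 2) 0 1).
Proof.
  intro K.
  set (P := fun x => x * f0 x * f2 x - f0 x * f1 x + (b-1)/2 * x * f1 x ^ 2 + a * (x * f1 x - f0 x)).
  set (dP := fun x => x * (f0 x * f3 x + b * f1 x * f2 x + a * f2 x) - (3 - b)/2 * f1 x ^ 2).
  assert (HP : is_RInt dP 0 1 (minus (P 1) (P 0))).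
  { apply (is_RInt_derive P dP); rng01; intros x Hx;
      destruct (K x Hx) as (D0 & D1 & D2 & C0 & C1 & C2 & C3).
    - unfold P, dP. auto_derive.
      + repeat split; eexists; eassumption.
      + replace (Derive (fun x0 => f2 x0) x) with (f3 x) by (symmetry; apply is_derive_unique; exact D2).
        replace (Derive (fun x0 => f1 x0) x) with (f2 x) by (symmetry; apply is_derive_unique; exact D1).
        replace (Derive (fun x0 => f0 x0) x) with (f1 x) by (symmetry; apply is_derive_unique; exact D0).
        field.
    - unfold dP. cont. }
  assert (HI : is_RInt (fun x => f1 x ^ 2) 0 1 (RInt (fun x => f1 x ^ 2) 0 1)).
  { apply (RInt_correct (V:=R_CompleteNormedModule)). apply (ex_RInt_continuous (V:=R_CompleteNormedModule)); rng01; intros x Hx.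
    destruct (K x Hx) as (D0 & D1 & D2 & C0 & C1 & C2 & C3). cont. }
  assert (H := is_RInt_plus _ _ _ _ _ _ HP (is_RInt_scal _ _ _ ((3-b)/2) _ HI)).
  eapply is_RInt_ext; [| exact H].
  intros x _. unfold dP. unfold plus, scal; simpl. unfold mult; simpl. ring.
Qed.

Lemma L_F (g : R -> R) : (forall x, 0 <= x <= 1 -> continuous g x) ->
  (RInt g 0 1) ^ 2 <= RInt (fun x => g x ^ 2) 0 1.
Proof.
  intro Hg. set (h := RInt g 0 1).
  assert (HI1 : is_RInt g 0 1 h).
  { apply (RInt_correct (V:=R_CompleteNormedModule)). apply (ex_RInt_continuous (V:=R_CompleteNormedModule)); rng01; auto. }
  assert (HI2 : is_RInt (fun x => g x ^ 2) 0 1 (RInt (fun x => g x ^ 2) 0 1)).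
  { apply (RInt_correct (V:=R_CompleteNormedModule)). apply (ex_RInt_continuous (V:=R_CompleteNormedModule)); rng01; intros x Hx.
    specialize (Hg x Hx). cont. }
  assert (H := is_RInt_plus _ _ _ _ _ _ HI2
     (is_RInt_plus _ _ _ _ _ _ (is_RInt_scal _ _ _ (-2*h) _ HI1) (is_RInt_const 0 1 (h^2)))).
  assert (H' : is_RInt (fun x => (g x - h) ^ 2) 0 1
     (plus (RInt (fun x => g x ^ 2) 0 1) (plus (scal (-2*h) h) (scal (1 - 0) (h^2))))).
  { eapply is_RInt_ext; [| exact H]. intros x _. unfold plus, scal; simpl. unfold mult; simpl. ring. }
  assert (P : 0 <= RInt (fun x => (g x - h) ^ 2) 0 1).
  { apply RInt_ge_0. lra. eexists; exact H'. intros x _. apply pow2_ge_0. }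
  rewrite (is_RInt_unique _ _ _ _ H') in P.
  revert P. unfold plus, scal; simpl. unfold mult; simpl. intro P. nra.
Qed.

Lemma dX w u x s : C3_at u x s -> (length w < 3)%nat ->
  is_derive (fun y => dpart w u y s) x (dpart (true::w) u x s).
Proof. intros [H _] Hl. apply Derive_correct. apply (H w Hl). Qed.

Lemma cX w u x s : C3_at u x s -> (length w <= 3)%nat ->
  continuous (fun y => dpart w u y s) x.
Proof. intros [_ H] Hl. apply cont_x. apply (H w Hl). Qed.

Lemma Kh_of u s : (forall x, 0 <= x <= 1 -> C3_at u x s) ->
  Kh (fun y => u y s) (fun y => dx u y s) (fun y => dx (dx u) y s) (fun y => dx (dx (dx u)) y s).
Proof.
  intros Hc x Hx. specialize (Hc x Hx).
  split; [exact (dX nil u x s Hc ltac:(simpl; lia))|].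
  split; [exact (dX (true::nil) u x s Hc ltac:(simpl; lia))|].
  split; [exact (dX (true::true::nil) u x s Hc ltac:(simpl; lia))|].
  split; [exact (cX nil u x s Hc ltac:(simpl; lia))|].
  split; [exact (cX (true::nil) u x s Hc ltac:(simpl; lia))|].
  split; [exact (cX (true::true::nil) u x s Hc ltac:(simpl; lia))|].
  exact (cX (true::true::true::nil) u x s Hc ltac:(simpl; lia)).
Qed.

Lemma c2d_swap f x y : continuity_2d_pt f x y -> continuity_2d_pt (fun a b => f b a) y x.
Proof.
  intros H eps. destruct (H eps) as [d Hd]. exists d. intros a b Ha Hb. apply Hd; auto.
Qed.

Lemma locally_of (t : R) (d : posreal) (P : R -> Prop) :
  (forall s, Rabs (s - t) < d -> P s) -> locally t P.
Proof. intros H. exists d. intros y Hy. apply H. exact Hy. Qed.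

Theorem mainTheorem3 (n : nat) (T : Rbar) (alpha : R -> R) (u : R -> R -> R) :
  (2 <= n)%nat ->
  continuous_on_nonneg alpha ->
  C3_on_strip u T ->
  (forall x t, 0 <= x <= 1 -> 0 <= t -> Rbar_lt t T ->
     dt (dx (dx u)) x t + u x t * dx (dx (dx u)) x t
     + ((INR n - 3) / (INR n - 1)) * dx u x t * dx (dx u) x t
     + alpha t * dx (dx u) x t = 0) ->
  (forall t, 0 <= t -> Rbar_lt t T ->
     u 1 t = 0 /\ dx u 0 t = 0 /\ dx u 1 t = 0) ->
  let H := fun t => - RInt (fun x => dx u x t) 0 1 in
  forall t, 0 <= t -> Rbar_lt t T ->
    H t = u 0 t /\
    ex_derive H t /\
    Derive H t + alpha t * H t
      + (INR n / (INR n - 1)) * RInt (fun x => (dx u x t) ^ 2) 0 1 = 0 /\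
    Derive H t + alpha t * H t + (INR n / (INR n - 1)) * (H t) ^ 2 <= 0.
Proof.
  intros Hn Halpha HC Hpde Hbc H t Ht HT.
  destruct (uniform_nbhd u T t HC Ht HT) as [d Hd].
  assert (Hdt0 : Rabs (t - t) < d).
  { rewrite Rminus_diag_eq, Rabs_R0 by reflexivity. apply cond_pos. }
  assert (Kt : forall s, Rabs (s - t) < d -> Kh (fun y => u y s) (fun y => dx u y s)
      (fun y => dx (dx u) y s) (fun y => dx (dx (dx u)) y s)).
  { intros s Hs. apply Kh_of. intros x Hx. apply Hd; auto. }
  set (F := fun s => RInt (fun x => x * dx (dx u) x s) 0 1).
  assert (HA : forall s, Rabs (s - t) < d -> H s = F s - dx u 1 s).
  { intros s Hs. unfold H, F. cbv beta.
    rewrite (is_RInt_unique _ _ _ _ (L_A1 _ _ _ _ (Kt s Hs))).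
    rewrite (is_RInt_unique _ _ _ _ (L_A2 _ _ _ _ (Kt s Hs))). ring. }
  assert (HHt : H t = u 0 t).
  { unfold H. cbv beta.
    rewrite (is_RInt_unique _ _ _ _ (L_A1 _ _ _ _ (Kt t Hdt0))).
    destruct (Hbc t Ht HT) as (B1 & B2 & B3). rewrite B1. ring. }
  set (Ft := RInt (fun x => x * dt (dx (dx u)) x t) 0 1).
  assert (HB : is_derive F t Ft).
  { assert (E : RInt (fun x => Derive (fun z => x * dx (dx u) x z) t) 0 1 = Ft).
    { unfold Ft. apply RInt_ext. intros x _. rewrite Derive_scal. reflexivity. }
    rewrite <- E. unfold F.
    apply (is_derive_RInt_param (fun z x => x * dx (dx u) x z) 0 1 t).
    - apply (locally_of t d). intros s Hs x Hx.
      rewrite Rmin_left, Rmax_right in Hx by lra.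
      apply ex_derive_scal. destruct (Hd x s Hx Hs) as [Hdd _].
      exact (proj2 (Hdd (true::true::nil) ltac:(simpl; lia))).
    - intros x Hx. rewrite Rmin_left, Rmax_right in Hx by lra.
      apply (continuity_2d_pt_ext (fun z y => y * dt (dx (dx u)) y z)).
      { intros z y. rewrite Derive_scal. reflexivity. }
      apply (continuity_2d_pt_mult (fun _ v => v) (fun z y => dt (dx (dx u)) y z)).
      apply continuity_2d_pt_id2.
      apply (c2d_swap (fun y z => dt (dx (dx u)) y z)). apply cont2d.
      destruct (Hd x t Hx Hdt0) as [_ Hcc].
      exact (Hcc (false::true::true::nil) ltac:(simpl; lia)).
    - apply (locally_of t d). intros s Hs.
      apply (ex_RInt_continuous (V:=R_CompleteNormedModule)).
      rewrite Rmin_left, Rmax_right by lra. intros x Hx.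
      destruct (Kt s Hs x Hx) as (D0 & D1 & D2 & C0 & C1 & C2 & C3). cont. }
  assert (HC1 : ex_derive (fun z => dx u 1 z) t).
  { destruct (Hd 1 t ltac:(lra) Hdt0) as [Hdd _].
    exact (proj2 (Hdd (true::nil) ltac:(simpl;lia))). }
  assert (HC0 : Derive (fun z => dx u 1 z) t = 0).
  { destruct T as [r| |]; simpl in HT.
    - apply (deriv_zero_right _ t (r - t)); [lra| |exact HC1].
      intros s Hs. apply (proj2 (proj2 (Hbc s ltac:(lra) ltac:(simpl; lra)))).
    - apply (deriv_zero_right _ t 1); [lra| |exact HC1].
      intros s Hs. apply (proj2 (proj2 (Hbc s ltac:(lra) I))).
    - contradiction. }
  assert (HD : is_derive H t Ft).
  { apply (is_derive_ext_loc (fun s => F s - dx u 1 s)).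
    - apply (locally_of t d). intros s Hs. symmetry. apply HA. exact Hs.
    - replace Ft with (minus Ft 0) by (unfold minus, plus, opp; simpl; ring).
      apply (is_derive_minus F (fun s => dx u 1 s)). exact HB.
      rewrite <- HC0. apply Derive_correct. exact HC1. }
  set (b := (INR n - 3) / (INR n - 1)).
  set (I := RInt (fun x => dx u x t ^ 2) 0 1).
  assert (HE := L_E _ _ _ _ (alpha t) b (Kt t Hdt0)). cbv beta in HE.
  fold I in HE.
  assert (HE2 := is_RInt_opp _ _ _ _ HE).
  assert (HFt : Ft = - (alpha t * u 0 t + (3 - b) / 2 * I)).
  { destruct (Hbc t Ht HT) as (B1 & B2 & B3).
    unfold Ft. erewrite is_RInt_unique; [ | eapply is_RInt_ext; [ | exact HE2 ] ].
    - rewrite B1, B2, B3. unfold opp; simpl. ring.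
    - intros x Hx. rewrite Rmin_left, Rmax_right in Hx by lra.
      assert (P := Hpde x t ltac:(lra) Ht HT). fold b in P.
      unfold opp; simpl. nra. }
  assert (Hn1 : 2 <= INR n) by (replace 2 with (INR 2) by (simpl; ring); apply le_INR; exact Hn).
  assert (Hc : (3 - b) / 2 = INR n / (INR n - 1)) by (unfold b; field; lra).
  assert (HDH : Derive H t = Ft) by (apply is_derive_unique; exact HD).
  assert (HI : (RInt (fun x => dx u x t) 0 1) ^ 2 <= I).
  { apply L_F. intros x Hx. destruct (Kt t Hdt0 x Hx) as (D0 & D1 & D2 & C0 & C1 & C2 & C3). exact C1. }
  assert (HH2 : H t ^ 2 = (RInt (fun x => dx u x t) 0 1) ^ 2) by (unfold H; ring).
  assert (Hcpos : 0 < INR n / (INR n - 1)) by (apply Rdiv_lt_0_compat; lra).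
  split; [exact HHt|]. split; [eexists; exact HD|].
  rewrite HDH, HFt, HHt, <- Hc.
  split; [ring|].
  rewrite <- HHt, HH2, Hc. rewrite HHt.
  apply Rmult_le_compat_l with (r := INR n / (INR n - 1)) in HI; [|lra].
  lra.
Qed.
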